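(* Let $(G,N,\theta)_{\mathcal H}\ge_c(H,M,\varphi)_{\mathcal H}$. Suppose that $L\trianglelefteq G$ is contained in $\ker\theta\cap\ker\varphi\cap\mathbf C_G(N)$ and that $\mathbf C_{G/L}(N/L)=\mathbf C_G(N)/L$. Then $(G/L,N/L,\theta)_{\mathcal H}\ge_c(H/L,M/L,\varphi)_{\mathcal H}$, where $\theta$ and $\varphi$ are regarded as characters of $N/L$ and $M/L$.
   Context: All groups are finite; $p$ is a fixed prime. $\mathbb Q^{\mathrm{ab}}\subseteq\mathbb C$ is generated by all roots of unity, $\mathcal G=\mathrm{Gal}(\mathbb Q^{\mathrm{ab}}/\mathbb Q)$, $\mathcal H\le\mathcal G$ consists of those $\sigma$ for which there is an integer $f$ with $\sigma(\xi)=\xi^{p^f}$ for all roots of unity $\xi$ of order prime to $p$. For $N\trianglelefteq G$, $\theta\in\mathrm{Irr}(N)$, $g\in G$, $\sigma\in\mathcal G$: $\theta^{g\sigma}(n)=\sigma(\theta(gng^{-1}))$; $A_\theta$ the stabilizer in $A\le G\times\mathcal G$; $\theta^{\mathcal H}$ the $\mathcal H$-orbit; $G_{\theta^{\mathcal H}}=\{g:\theta^g\in\theta^{\mathcal H}\}$. $(G,N,\theta)_{\mathcal H}$ is an $\mathcal H$-triple if $N\trianglelefteq G$, $\theta\in\mathrm{Irr}(N)$, $G_{\theta^{\mathcal H}}=G$. Projective representation $\mathcal P$ with factor set $\alpha$: $\mathcal P(x)\mathcal P(y)=\alpha(x,y)\mathcal P(xy)$. For $G$-invariant $\theta$, $\mathcal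 P$ is associated with $\theta$ if $\mathcal P_N$ affords $\theta$ and $\mathcal P(ng)=\mathcal P(n)\mathcal P(g)$, $\mathcal P(gn)=\mathcal P(g)\mathcal P(n)$. $\mathcal Q\sim\mu\mathcal P$ means $\mathcal Q(x)=\mu(x)M^{-1}\mathcal P(x)M$ for fixed invertible $M$. For $\mathcal P$ associated with $\theta$ on $G_\theta$ with entries in $\mathbb Q^{\mathrm{ab}}$ and $\theta^{x\sigma}=\theta$: $\mathcal P^{x\sigma}(y)=\sigma(\mathcal P(xyx^{-1}))$, and $\mu_{x\sigma}$ is the unique function $G_\theta\to\mathbb C^\times$, constant on $N$-cosets, $\mu_{x\sigma}(1)=1$, with $\mathcal P^{x\sigma}\sim\mu_{x\sigma}\mathcal P$. $(G,N,\theta)_{\mathcal H}\ge_c(H,M,\varphi)_{\mathcal H}$ (both $\mathcal H$-triples, $H\le G$) means: (i) $G=NH$, $N\cap H=M$, $\mathbf C_G(N)\subseteq H$; (ii) $(H\times\mathcal H)_\theta=(H\times\mathcal H)_\varphi$; (iii) there are projective representations $\mathcal P$ of $G_\theta$ associated with $\theta$ and $\mathcal P'$ of $H_\varphi$ associated with $\varphi$, entries in $\mathbb Q^{\mathrm{ab}}$, factor sets with root-of-unity values agreeing on $H_\theta\times H_\theta$, and $\mathcal P(c),\mathcal P'(c)$ the same scalar for all $c\in\mathbf C_G(N)$; (iv) $\mu_a=\mu'_a$ on $H_\theta$ for all $a\in(H\times\mathcal H)_\theta$. *)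

(* Defs.v *)
From HB Require Import structures.
From mathcomp Require Import all_boot all_order all_algebra all_fingroup all_solvable all_field all_character.
Unset Implicit Arguments. Unset Printing Implicit Defensive.
Import GRing.Theory Num.Theory.
Local Open Scope ring_scope.

(* Galois automorphisms sigma of Q^ab are represented by (any extension to)
   field automorphisms of algC, i.e. {rmorphism algC -> algC}; all
   conditions below only depend on the restriction to Q^ab. *)

Definition in_Qab (z : algC) : Prop :=
  exists (n : nat) (e : algC) (q : {poly rat}),
    n.-primitive_root e /\ z = (map_poly ratr q).[e].

Definition root_of_unity (z : algC) : Prop :=
  exists2 k : nat, (0 < k)%N & z ^+ k = 1.

(* sigma in calH: there is an integer f with sigma(xi) = xi^(p^f) for all
   roots of unity xi of order prime to p; f < 0 is encoded as
   sigma(xi)^(p^|f|) = xi. *)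
Definition in_calH (p : nat) (s : {rmorphism algC -> algC}) : Prop :=
  exists f : nat,
    (forall (n : nat) (xi : algC), (0 < n)%N -> coprime n p -> xi ^+ n = 1 ->
        s xi = xi ^+ (p ^ f)) \/
    (forall (n : nat) (xi : algC), (0 < n)%N -> coprime n p -> xi ^+ n = 1 ->
        (s xi) ^+ (p ^ f) = xi).

Section Triples.
Context {gT : finGroupType}.

Definition cfAct {N : {group gT}} (th : 'CF(N)) (g : gT)
    (s : {rmorphism algC -> algC}) : 'CF(N) :=
  cfAut s (th ^ g)%CF.

Definition Htriple (p : nat) (G N : {group gT}) (th : 'CF(N)) : Prop :=
  [/\ (N <| G)%g, th \in irr N &
      forall g, g \in G -> exists2 s, in_calH p s & (th ^ g)%CF = cfAut s th].

Definition proj_rep {n : nat} (K : {set gT}) (P : gT -> 'M[algC]_n)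
    (alpha : gT -> gT -> algC) : Prop :=
  (forall x, x \in K -> P x \in unitmx) /\
  (forall x y, x \in K -> y \in K -> P x *m P y = alpha x y *: P (x * y)%g).

Definition assoc_with {n : nat} (K : {set gT}) {N : {group gT}} (th : 'CF(N))
    (P : gT -> 'M[algC]_n) : Prop :=
  [/\ (forall x y, x \in N -> y \in N -> P (x * y)%g = P x *m P y),
      (forall x, x \in N -> \tr (P x) = th x),
      (forall x y, x \in N -> y \in K -> P (x * y)%g = P x *m P y) &
      (forall x y, x \in K -> y \in N -> P (x * y)%g = P x *m P y)].

Definition entries_Qab {n : nat} (K : {set gT}) (P : gT -> 'M[algC]_n) : Prop :=
  forall x, x \in K -> forall i j, in_Qab (P x i j).

Definition projAct {n : nat} (P : gT -> 'M[algC]_n) (x : gT)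
    (s : {rmorphism algC -> algC}) : gT -> 'M[algC]_n :=
  fun y => map_mx s (P (x * y * x^-1)%g).

Definition is_mu {n : nat} (K N : {set gT}) (P : gT -> 'M[algC]_n) (x : gT)
    (s : {rmorphism algC -> algC}) (mu : gT -> algC) : Prop :=
  [/\ mu 1%g = 1,
      (forall y, y \in K -> mu y != 0),
      (forall y z, y \in K -> z \in K -> (N :* y = N :* z)%g -> mu y = mu z) &
      exists2 M : 'M[algC]_n, M \in unitmx &
        forall y, y \in K -> projAct P x s y = mu y *: (invmx M *m P y *m M)].

Definition ge_c (p : nat) (G N : {group gT}) (th : 'CF(N))
    (H M : {group gT}) (ph : 'CF(M)) : Prop :=
  [/\ Htriple p G N th, Htriple p H M ph & H \subset G] /\
  [/\
      [/\ (N * H)%g = G, N :&: H = M & ('C_G(N))%g \subset H],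

      (forall x s, x \in H -> in_calH p s ->
         (cfAct th x s = th <-> cfAct ph x s = ph)) &
      exists (n m : nat) (P : gT -> 'M[algC]_n) (P' : gT -> 'M[algC]_m)
             (alpha alpha' : gT -> gT -> algC),
      [/\ [/\ proj_rep ('I_G[th])%g P alpha, assoc_with ('I_G[th])%g th P,
              entries_Qab ('I_G[th])%g P &
              forall x y, x \in ('I_G[th])%g -> y \in ('I_G[th])%g -> root_of_unity (alpha x y)],
          [/\ proj_rep ('I_H[ph])%g P' alpha', assoc_with ('I_H[ph])%g ph P',
              entries_Qab ('I_H[ph])%g P' &
              forall x y, x \in ('I_H[ph])%g -> y \in ('I_H[ph])%g -> root_of_unity (alpha' x y)],
          (forall x y, x \in ('I_H[th])%g -> y \in ('I_H[th])%g -> alpha x y = alpha' x y),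
          (forall c, c \in ('C_G(N))%g -> exists lam : algC, P c = lam%:M /\ P' c = lam%:M) &
          (forall x s, x \in H -> in_calH p s -> cfAct th x s = th ->
             forall mu mu' : gT -> algC,
               is_mu ('I_G[th])%g N P x s mu -> is_mu ('I_H[ph])%g M P' x s mu' ->
               {in ('I_H[th])%g, mu =1 mu'})]].

End Triples.

(* Main.v *)
Require Import Defs.
From mathcomp Require Import all_boot all_order all_algebra all_fingroup all_solvable all_field all_character.
Local Open Scope group_scope.
Import GRing.Theory.
Section Helpers.
Local Open Scope ring_scope.
Variable gT : finGroupType.
Implicit Types G N K L : {group gT}.

Lemma P1_id n (K N : {group gT}) (P : gT -> 'M[algC]_n) al :
  N \subset K -> proj_rep K P al ->
  (forall x y, x \in N -> y \in N -> P (x * y)%g = P x *m P y) ->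
  P 1%g = 1%:M.
Proof.
move=> sNK [uP _] mP.
have K1 : (1%g : gT) \in K by rewrite group1.
have e : P 1%g *m P 1%g = P 1%g *m 1%:M by rewrite -mP ?group1 // mulg1 mulmx1.
by have := congr1 (mulmx (invmx (P 1%g))) e; rewrite !mulmxA mulVmx ?uP // !mul1mx.
Qed.

Lemma assoc_ker1 n (K N : {group gT}) (th : 'CF(N)) (P : gT -> 'M[algC]_n) al :
  N \subset K -> proj_rep K P al -> assoc_with K th P ->
  forall l, l \in cfker th -> P l = 1%:M.
Proof.
move=> sNK prP [mP trP _ _] l kl.
have P1 := @P1_id n K N P al sNK prP mP.
have rP : mx_repr N P by split.
pose rN := MxRepresentation rP.
have eth : cfRepr rN = th.
  apply/cfunP=> x; rewrite cfunE.
  case Nx: (x \in N); first by rewrite mulr1n trP.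
  by rewrite mulr0n cfun0 ?Nx.
move: kl; rewrite -eth cfker_repr => /rkerP[_]; by [].
Qed.

Local Open Scope group_scope.

Lemma repr_quo (K L : {group gT}) (a : coset_of L) :
  L \subset K -> a \in K / L -> repr a \in K /\ coset L (repr a) = a.
Proof.
move=> sLK /morphimP[k Nk Kk ->]; split; last exact: coset_reprK.
have := mem_repr_coset (coset L k); rewrite val_coset // => /rcosetP[l Ll ->].
by rewrite groupM // (subsetP sLK).
Qed.

Lemma PbE n (K N L : {group gT}) (th : 'CF(N)) (P : gT -> 'M[algC]_n) al k :
  L \subset cfker th -> N \subset K -> proj_rep K P al -> assoc_with K th P ->
  k \in K -> k \in 'N(L) -> P (repr (coset L k)) = P k.
Proof.
move=> sL sNK prP asP Kk Nk.
have := mem_repr_coset (coset L k); rewrite val_coset // => /rcosetP[l Ll ->].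
have [_ _ m3 _] := asP.
have lN : l \in N by apply: (subsetP (cfker_sub th)); apply: (subsetP sL).
rewrite m3 // (@assoc_ker1 n K N th P al sNK prP asP l) ?mul1mx //.
exact: (subsetP sL).
Qed.

Lemma quo_proj n (K N L : {group gT}) (th : 'CF(N)) (P : gT -> 'M[algC]_n) al :
  L \subset cfker th -> N \subset K -> K \subset 'N(L) ->
  [/\ proj_rep K P al, assoc_with K th P, entries_Qab K P &
      forall x y, x \in K -> y \in K -> Defs.root_of_unity (al x y)] ->
  [/\ proj_rep (K / L) (fun a => P (repr a)) (fun a b => al (repr a) (repr b)),
      assoc_with (K / L) (th / L)%CF (fun a => P (repr a)),
      entries_Qab (K / L) (fun a => P (repr a)) &
      forall a b, a \in K / L -> b \in K / L -> Defs.root_of_unity (al (repr a) (repr b))].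
Proof.
move=> sL sNK nLK [prP asP qP ruP].
have sLN : L \subset N := subset_trans sL (cfker_sub th).
have sLK : L \subset K := subset_trans sLN sNK.
have nsLN : L <| N by rewrite /normal sLN (subset_trans sNK nLK).
have RK a : a \in K / L -> repr a \in K /\ coset L (repr a) = a by exact: repr_quo.
have RN a : a \in N / L -> repr a \in N /\ coset L (repr a) = a by exact: repr_quo.
have nK x : x \in K -> x \in 'N(L) by move/(subsetP nLK).
have PE x : x \in K -> P (repr (coset L x)) = P x.
  by move=> Kx; apply: (@PbE n K N L th P al) => //; apply: nK.
have sNK' x : x \in N -> x \in K by move/(subsetP sNK).
have [uP mP] := prP; have [m1 m2 m3 m4] := asP.
split.
- split=> [a /RK[Ka _] | a b /RK[Ka ea] /RK[Kb eb]]; first exact: uP.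
  have -> : (a * b = coset L (repr a * repr b))%g by rewrite morphM ?nK //; exact: (esym (congr2 mulg ea eb)).
  by rewrite mP // PE // groupM.
- have EM (a b : coset_of L) : repr a \in K -> repr b \in K -> coset L (repr a) = a ->
      coset L (repr b) = b -> (a * b = coset L (repr a * repr b))%g.
    move=> Ka Kb ea eb; rewrite morphM ?nK //; exact: (esym (congr2 mulg ea eb)).
  split.
  + move=> a b /RN[Na ea] /RN[Nb eb].
    have Ka := sNK' _ Na; have Kb := sNK' _ Nb.
    by rewrite (EM a b Ka Kb ea eb) PE ?groupM // m1.
  + by move=> a /RN[Na ea]; rewrite m2 // -{2}ea cfQuoE.
  + move=> a b /RN[Na ea] /RK[Kb eb].
    have Ka := sNK' _ Na.
    by rewrite (EM a b Ka Kb ea eb) PE ?groupM // m3.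
  + move=> a b /RK[Ka ea] /RN[Nb eb].
    have Kb := sNK' _ Nb.
    by rewrite (EM a b Ka Kb ea eb) PE ?groupM // m4.
- by move=> a /RK[Ka _]; apply: qP.
- by move=> a b /RK[Ka _] /RK[Kb _]; apply: ruP.
Qed.


Lemma quo_inj (N L : {group gT}) (a b : 'CF(N)) :
  L <| N -> L \subset cfker a -> L \subset cfker b ->
  (a / L)%CF = (b / L)%CF -> a = b.
Proof.
by move=> nsLN ka kb e; rewrite -(cfQuoK nsLN ka) -(cfQuoK nsLN kb) e.
Qed.

Lemma cfAct_quo (G N L : {group gT}) (th : 'CF(N)) y s :
  N <| G -> L <| G -> L \subset cfker th -> y \in G ->
  cfAct (th / L)%CF (coset L y) s = (th / L)%CF <-> cfAct th y s = th.
Proof.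
move=> nsNG nsLG sL Gy; rewrite /cfAct (cfConjgQuo _ nsNG nsLG Gy) cfAutQuo.
have sLN : L \subset N := subset_trans sL (cfker_sub th).
have nsLN : L <| N := normalS sLN (normal_sub nsNG) nsLG.
have nNy : y \in 'N(N) := subsetP (normal_norm nsNG) y Gy.
have nLy : y \in 'N(L) := subsetP (normal_norm nsLG) y Gy.
split=> [e | ->] //; apply: (quo_inj _ _ _ _ nsLN) => //.
by rewrite cfker_aut cfker_conjg // -(normP nLy) conjSg.
Qed.

Lemma Htriple_quo p (G N L : {group gT}) (th : 'CF(N)) :
  Htriple p G N th -> L <| G -> L \subset cfker th ->
  Htriple p (G / L)%G (N / L)%G (th / L)%CF.
Proof.
move=> [nsNG irrth cj] nsLG sL.
have sLN : L \subset N := subset_trans sL (cfker_sub th).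
have nsLN : L <| N := normalS sLN (normal_sub nsNG) nsLG.
split; first exact: quotient_normal.
  by rewrite cfQuo_irr.
move=> g /morphimP[x Nx Gx ->]; have [s Hs e] := cj x Gx.
by exists s => //; rewrite (cfConjgQuo _ nsNG nsLG Gx) e cfAutQuo.
Qed.

Lemma conj_inertia (G N : {group gT}) (th : 'CF(N)) x s y :
  N <| G -> x \in G -> cfAct th x s = th -> y \in 'I_G[th] ->
  x * y * x^-1 \in 'I_G[th].
Proof.
move=> nsNG Gx e /setIP[Gy /setIdP[nNy /eqP thy]].
have nNG := normal_norm nsNG.
have nNx : x \in 'N(N) := subsetP nNG x Gx.
rewrite inE; apply/andP; split; first by rewrite !groupM ?groupV.
rewrite inE !groupM ?groupV ?(subsetP nNG) //=.
set psi := (th ^ x)%CF.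
have psiy : (psi ^ y)%CF = psi.
  apply: (cfAut_inj s); rewrite cfAutConjg.
  by move: e; rewrite /cfAct -/psi => ->.
rewrite !cfConjgMnorm ?groupV ?groupM // -/psi psiy.
by rewrite -cfConjgMnorm ?groupV // mulgV cfConjgJ1.
Qed.


Lemma is_mu_lift n (K N L : {group gT}) (th : 'CF(N)) (P : gT -> 'M[algC]_n) al
    x0 s (mub : coset_of L -> algC) :
  L \subset cfker th -> N \subset K -> K \subset 'N(L) ->
  proj_rep K P al -> assoc_with K th P -> x0 \in 'N(L) ->
  (forall y, y \in K -> x0 * y * x0^-1 \in K) ->
  is_mu (K / L) (N / L) (fun a => P (repr a)) (coset L x0) s mub ->
  is_mu K N P x0 s (fun y => mub (coset L y)).
Proof.
move=> sL sNK nLK prP asP nx0 cK [m1 nz cst [Mx uM eq]].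
have nK y : y \in K -> y \in 'N(L) by move/(subsetP nLK).
have sNK' y : y \in N -> y \in K by move/(subsetP sNK).
have PE y : y \in K -> P (repr (coset L y)) = P y.
  by move=> Ky; apply: (@PbE n K N L th P al) => //; apply: nK.
split.
- by rewrite morph1.
- by move=> y Ky; apply: nz; apply: mem_quotient.
- move=> y z Ky Kz e; apply: cst; try exact: mem_quotient.
  have: y \in N :* z by rewrite -e rcoset_refl.
  rewrite mem_rcoset => yz.
  apply/rcoset_eqP; rewrite mem_rcoset.
  have -> : (coset L y * (coset L z)^-1 = coset L (y * z^-1))%g.
    by rewrite morphM ?groupV ?nK // morphV ?nK.
  exact: mem_quotient.
- exists Mx => // y Ky; have := eq (coset L y) (mem_quotient _ Ky).
  rewrite /projAct.
  have -> : (coset L x0 * coset L y * (coset L x0)^-1 = coset L (x0 * y * x0^-1))%g.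
    have nKy := nK y Ky; have nx0V : x0^-1 \in 'N(L) by rewrite groupV.
    by rewrite morphM ?groupM // morphM // morphV.
  by rewrite !PE // cK.
Qed.

End Helpers.

Arguments repr_quo {gT K L a}.
Arguments cfAct_quo {gT G N L th y} s.
Arguments conj_inertia {gT G N th x s y}.
Arguments Htriple_quo {gT p G N L th}.

Theorem lemma2p4 (p : nat) (gT : finGroupType) (G N H M L : {group gT})
    (th : 'CF(N)) (ph : 'CF(M)) :
  prime p ->
  ge_c p G N th H M ph ->
  L <| G ->
  L \subset cfker th :&: cfker ph :&: 'C_G(N) ->
  'C_(G / L)(N / L) = 'C_G(N) / L ->
  ge_c p (G / L)%G (N / L)%G (th / L)%CF (H / L)%G (M / L)%G (ph / L)%CF.
Proof.
move=> _ [[trG trH sHG] [[defG defM sCH] iiH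
  [n [m [P [P' [al [al' [Pdat P'dat eqal scal ivH]]]]]]]]] nsLG sL eqC.
have [[sLth sLph] sLC] : (L \subset cfker th /\ L \subset cfker ph) /\ L \subset 'C_G(N).
  by move: sL; rewrite !subsetI => /andP[/andP[-> ->] ->].
have [nsNG _ _] := trG; have [nsMH _ _] := trH.
have sNG := normal_sub nsNG; have sMH := normal_sub nsMH.
have sLN : L \subset N := subset_trans sLth (cfker_sub th).
have sLM : L \subset M := subset_trans sLph (cfker_sub ph).
have sLH : L \subset H := subset_trans sLM sMH.
have nLG := normal_norm nsLG.
have nsLH : L <| H := normalS sLH sHG nsLG.
have nLH : H \subset 'N(L) := subset_trans sHG nLG.
have sNIG : N \subset 'I_G[th] := sub_Inertia th sNG.
have sMIH : M \subset 'I_H[ph] := sub_Inertia ph sMH.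
have sIGN : 'I_G[th] \subset 'N(L) := subset_trans (subsetIl _ _) nLG.
have sIHN : 'I_H[ph] \subset 'N(L) := subset_trans (subsetIl _ _) nLH.
have IGq := inertia_quo nsNG nsLG sLth.
have RIH a : a \in 'I_(H / L)[th / L] -> repr a \in 'I_H[th] /\ coset L (repr a) = a.
  move=> /setIP[Ha Ia].
  have : a \in 'I_(G / L)[th / L] by rewrite inE Ia (subsetP (quotientS L sHG)).
  rewrite IGq => /(@repr_quo gT ('I_G[th])%G L a (subset_trans sLN sNIG)) [/setIP[_ Ir] ea].
  have [Hr _] := repr_quo sLH Ha.
  by rewrite inE Hr Ir.
split.
  split; [exact: Htriple_quo | exact: Htriple_quo | exact: quotientS].
split.
- split.
  + by rewrite -quotientMl ?defG // (subset_trans sNG nLG).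
  + by rewrite -quotientGI // defM.
  + by rewrite eqC quotientS.
- move=> x s /morphimP[y Ny Hy ->] Hs.
  have Gy := subsetP sHG y Hy.
  have e1 := cfAct_quo s nsNG nsLG sLth Gy.
  have e2 := cfAct_quo s nsMH nsLH sLph Hy.
  have e3 := iiH y s Hy Hs.
  tauto.
exists n, m, (fun a : coset_of L => P (repr a)), (fun a : coset_of L => P' (repr a)),
  (fun a b : coset_of L => al (repr a) (repr b)),
  (fun a b : coset_of L => al' (repr a) (repr b)).
rewrite IGq (inertia_quo nsMH nsLH sLph).
split.
- exact: (@quo_proj gT n ('I_G[th])%G N L th P al sLth sNIG sIGN Pdat).
- exact: (@quo_proj gT m ('I_H[ph])%G M L ph P' al' sLph sMIH sIHN P'dat).
- move=> a b /RIH[Ia _] /RIH[Ib _]; exact: eqal.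
- move=> c; rewrite eqC => Cc.
  have [Cr _] := repr_quo sLC Cc.
  exact: scal.
- move=> x s Hx Hs.
  have [Hx0 ex] := repr_quo sLH Hx.
  set x0 := repr x in Hx0 ex *.
  rewrite -ex => e mub mub' imu imu'.
  have [prP asP _ _] := Pdat; have [prP' asP' _ _] := P'dat.
  have Gx0 := subsetP sHG x0 Hx0.
  have e0 : cfAct th x0 s = th by apply/(cfAct_quo s nsNG nsLG sLth Gx0).
  have e0' : cfAct ph x0 s = ph := (iiH x0 s Hx0 Hs).1 e0.
  have nx0 : x0 \in 'N(L) := subsetP nLH x0 Hx0.
  have imu0 := @is_mu_lift gT n ('I_G[th])%G N L th P al x0 s _ sLth sNIG sIGN
    prP asP nx0 (fun y => conj_inertia nsNG Gx0 e0) imu.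
  have imu0' := @is_mu_lift gT m ('I_H[ph])%G M L ph P' al' x0 s _ sLph sMIH sIHN
    prP' asP' nx0 (fun y => conj_inertia nsMH Hx0 e0') imu'.
  have eqmu := ivH x0 s Hx0 Hs e0 _ _ imu0 imu0'.
  move=> a /RIH[Ia ea]; rewrite -ea; exact: eqmu.
Qed.
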